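(* Let $G$ be a locally compact abelian group (written additively) not reduced to its neutral element, $E$ an $\mathbb{R}$-group, and $\mathcal{H}=(H_\varepsilon)_{\varepsilon\in E}$ a continuous absorptive action of $E$ on $G$ compatible with the group operation ($H_\varepsilon(x+y)=H_\varepsilon(x)+H_\varepsilon(y)$). For $\varepsilon\in E$ let $\widehat H_\varepsilon:\widehat G\to\widehat G$ be defined by $\langle\widehat H_\varepsilon(\gamma),x\rangle=\langle\gamma,H_\varepsilon(x)\rangle$ ($\gamma\in\widehat G$, $x\in G$). Then $\widehat{\mathcal{H}}=(\widehat H_\varepsilon)_{\varepsilon\in E}$ is a continuous absorptive action of $E$ on $\widehat G$.
   Context: $\widehat G$ is the dual group of $G$ (continuous homomorphisms $G\to\{z\in\mathbb{C}:|z|=1\}$) with pointwise multiplication and the topology of compact convergence; $\langle\gamma,x\rangle$ is the value of $\gamma$ at $x$. An $\mathbb{R}$-group is an abelian group $E$ (operation written multiplicatively) whose underlying set is a subset of $\mathbb{R}$ containing all positive integers, such that: (RG1) with the natural order of $\mathbb{R}$, $E$ is a totally ordered group; (RG2) with the topology induced from $\mathbb{R}$, $E$ is a locally compact group; (RG3) there is a nonconstant continuous homomorphism $h:E\to\mathbb{R}_+^*$ such that for every $\alpha\in E$ the set $\{\varepsilon\in E:\varepsilon\ge\alpha\}$ is integrable for $h\cdot m$, $m$ a Haar measure on $E$. $e$ is the identity of $E$, $\varepsilon^{-1}$ the group inverse; inequalities refer to the order of $\mathbb{R}$. An action of $E$ on a space $X$ is a family $(H_\varepsilon)_{\varepsilon\in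 E}$ of bijections of $X$ with $H_\varepsilon\circ H_{\varepsilon'}=H_{\varepsilon\varepsilon'}$, $H_e=\mathrm{id}_X$; continuous if $(\varepsilon,x)\mapsto H_\varepsilon(x)$ is continuous on $E\times X$; absorptive if some $\omega\in X$ satisfies: for every neighbourhood $V$ of $\omega$ and every $x\in X$ there are a neighbourhood $U$ of $x$ and $\alpha\in E$ with $H_{\varepsilon^{-1}}(U)\subset V$ for all $\varepsilon\le\alpha$. *)

(* Defs.v *)
From HB Require Import structures.
From mathcomp Require Import all_boot all_order all_algebra.
From mathcomp Require Import all_classical all_reals all_analysis.
From mathcomp Require Import complex.
Set Implicit Arguments. Unset Strict Implicit. Unset Printing Implicit Defensive.
Import Order.TTheory GRing.Theory Num.Theory.
Import numFieldTopology.Exports numFieldNormedType.Exports.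
Local Open Scope classical_set_scope.
Local Open Scope ring_scope.
Local Open Scope complex_scope.

(* R-groups.  E is given by its underlying set S (a subset of R), its  *)
(* group law mul, inverse inv and identity e.                          *)
Section RGroup.
Variable R : realType.

(* topology induced by R; Borel sets of S are the Borel sets of R      *)
(* contained in S).  m is a Borel measure on R concentrated on S.     *)
Definition is_Haar_measure (S : set R) (mul : R -> R -> R)
    (m : {measure set R -> \bar R}) :=
  [/\ m (~` S) = 0%E,
      m S != 0%E,
      (forall K, compact K -> K `<=` S -> (m K < +oo)%E) &
      (forall a, S a -> forall A, measurable A -> A `<=` S ->
          m (mul a @` A) = m A)].

Definition is_RGroup (S : set R) (mul : R -> R -> R) (inv : R -> R) (e : R) :=
  [/\
   [/\ [/\ S e,
       (forall x y, S x -> S y -> S (mul x y)) &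
       (forall x, S x -> S (inv x))],
       (forall x y z, S x -> S y -> S z -> mul x (mul y z) = mul (mul x y) z),
       (forall x y, S x -> S y -> mul x y = mul y x),
       (forall x, S x -> mul e x = x) &
       (forall x, S x -> mul (inv x) x = e)],
   (forall n : nat, S n.+1%:R),
   (* (RG1) totally ordered group for the natural order of R *)
   (forall x y z, S x -> S y -> S z -> x <= y -> mul x z <= mul y z),
   (* (RG2) locally compact group for the topology induced by R *)
   [/\ (forall x y, S x -> S y -> forall eps : R, 0 < eps ->
          exists2 d : R, 0 < d & forall x' y', S x' -> S y' ->
            `|x' - x| < d -> `|y' - y| < d -> `|mul x' y' - mul x y| < eps),
       (forall x, S x -> forall eps : R, 0 < eps ->
          exists2 d : R, 0 < d & forall x', S x' ->
            `|x' - x| < d -> `|inv x' - inv x| < eps) &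
       (forall x, S x -> exists U, nbhs x U /\
          exists K, [/\ compact K, K `<=` S & U `&` S `<=` K])] &
   exists h : R -> R,
     [/\ (forall x, S x -> 0 < h x),
         (forall x y, S x -> S y -> h (mul x y) = h x * h y),
         (forall x, S x -> forall eps : R, 0 < eps ->
            exists2 d : R, 0 < d & forall x', S x' ->
              `|x' - x| < d -> `|h x' - h x| < eps),
         (exists x y, [/\ S x, S y & h x != h y]) &
         exists m : {measure set R -> \bar R}, is_Haar_measure S mul m /\
           forall a, S a ->
             (\int[m]_(x in [set x | S x /\ (a <= x)%R]) (h x)%:E < +oo)%E]].

(* Actions of E = (S, mul, inv, e) on a topological space X; H e is   *)
(* only meaningful for e in S.                                          *)
Context (S : set R) (mul : R -> R -> R) (inv : R -> R) (e : R).

Definition is_action (X : Type) (H : R -> X -> X) :=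
  [/\ (forall a, S a -> bijective (H a)),
      (forall a b, S a -> S b -> H a \o H b = H (mul a b)) &
      H e = id].

(* continuity of (a, x) |-> H a x on E x X, E with the topology of R *)
Definition continuous_action (X : topologicalType) (H : R -> X -> X) :=
  forall a0, S a0 -> forall x0 (V : set X), nbhs (H a0 x0) V ->
    exists2 d : R, 0 < d & exists U, nbhs x0 U /\
      forall a, S a -> `|a - a0| < d -> forall x, U x -> V (H a x).

Definition absorptive (X : topologicalType) (H : R -> X -> X) :=
  exists w : X, forall V, nbhs w V -> forall x : X,
    exists U, nbhs x U /\ exists2 al, S al &
      forall a, S a -> a <= al -> forall y, U y -> V (H (inv a) y).

End RGroup.

(* the usual (modulus) topology on the complex numbers R[i] *)
HB.instance Definition _ (R : realType) :=
  PseudoPointedMetric.copy R[i] (R[i])^o.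

Section Dual.
Variables (R : realType) (G : topologicalZmodType).

Definition is_character (g : G -> R[i]) :=
  [/\ continuous g, (forall x y, g (x + y) = g x * g y) &
      (forall x, `|g x| = 1)].

Record character := Character {
  char_fun :> G -> R[i];
  char_funP : `[< is_character char_fun >] }.

HB.instance Definition _ := [isSub for char_fun].
HB.instance Definition _ := gen_eqMixin character.
HB.instance Definition _ := gen_choiceMixin character.

(* basic neighbourhoods of compact convergence *)
Definition cc_basic : set (set character) :=
  [set B | exists g0 : character, exists K : set G, exists d : R,
     [/\ compact K, 0 < d &
         B = [set g : character | forall x, K x -> `|g x - g0 x| < d%:C]]].

HB.instance Definition _ :=
  isSubBaseTopological.Build character cc_basic id.

Definition dual_action (H : R -> G -> G) (a : R) (g : character) : character :=
  insubd g (char_fun g \o H a).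

End Dual.

(* Main.v *)
Require Import Defs.
From HB Require Import structures.
From mathcomp Require Import all_boot all_order all_algebra.
From mathcomp Require Import all_classical all_reals all_analysis.
From mathcomp Require Import complex.
From mathcomp Require Import ring lra finmap.
Import Order.TTheory GRing.Theory Num.Theory.
Import numFieldTopology.Exports numFieldNormedType.Exports.
Local Open Scope classical_set_scope.
Local Open Scope ring_scope.
Local Open Scope complex_scope.
Set Implicit Arguments. Unset Strict Implicit.
Section T.
Variables (R : realType) (G : topologicalZmodType).
Lemma openU (A : set (character R G)) : open A -> exists2 D : set (set (character R G)), D `<=` finI_from (cc_basic (G:=G)) id & A = \bigcup_(i in D) i.
Proof. move=> [D HD <-]. by exists D. Qed.
Definition nr (z : R[i]) : R := complex.Re `|z|.
Lemma nrE (z : R[i]) : `|z| = (nr z)%:C.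
Proof. by rewrite /nr RRe_real // normr_real. Qed.
Lemma nr_lt (z : R[i]) d : (`|z| < d%:C) = (nr z < d).
Proof. by rewrite nrE ltcR. Qed.
Lemma nr_ge0 (z : R[i]) : 0 <= nr z.
Proof. by rewrite -ler0c -nrE. Qed.
Lemma nrD (z w : R[i]) : nr (z + w) <= nr z + nr w.
Proof. rewrite -lecR -nrE. have -> : (nr z + nr w)%:C = (nr z)%:C + (nr w)%:C by rewrite rmorphD. rewrite -!nrE. exact: ler_normD. Qed.
Lemma nrM (z w : R[i]) : nr (z * w) = nr z * nr w.
Proof. by apply: complexI; rewrite rmorphM /= -!nrE normrM. Qed.
Lemma nrC (z w : R[i]) : nr (z - w) = nr (w - z).
Proof. by rewrite /nr distrC. Qed.
Lemma nr1 (z : R[i]) : (`|z| = 1) -> nr z = 1.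
Proof. by rewrite nrE => h; apply: complexI; rewrite h. Qed.
Lemma ballc (z w : R[i]) (e : R) : ball z e%:C w <-> `|z - w| < e%:C.
Proof. by []. Qed.

Definition ncont (f : G -> R[i]) := forall x (eps : R), 0 < eps ->
  \forall y \near x, nr (f y - f x) < eps.

Lemma char_ncont (g : character R G) : ncont g.
Proof.
move=> x eps eps0.
have /asboolP [gc _ _] := char_funP g.
have hb : (0:R[i]) < eps%:C by rewrite ltcR.
have := gc x; move/cvg_ballP => /(_ _ hb).
apply: filterS => y; rewrite /ball /=.
by rewrite distrC nr_lt.
Qed.

Lemma ball0_lt (c : R) : 0 < c -> nbhs (0:R) [set z | z < c].
Proof.
move=> c0; apply/nbhs_ballP; exists c => // z /=.
rewrite /ball /= sub0r normrN => h; exact: le_lt_trans (ler_norm z) h.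
Qed.

Lemma near0_pos (P : R -> Prop) : (\forall z \near (0:R), P z) -> exists2 z, 0 < z & P z.
Proof.
move=> /nbhs_ballP [e /= e0 He]; exists (e / 2); first by lra.
apply: He; rewrite /ball /= sub0r normrN gtr0_norm; lra.
Qed.

Lemma slack (f : G -> R[i]) K d : ncont f -> compact K ->
  (forall x, K x -> nr (f x) < d) ->
  exists2 del, 0 < del & forall x, K x -> nr (f x) < d - del.
Proof.
move=> fc /compact_near_coveringP cK hK.
have : \forall del \near (0:R), K `<=` (fun x => nr (f x) < d - del).
  apply: (cK R (nbhs (0:R)) (fun del x => nr (f x) < d - del) (nbhs_filter 0)) => x Kx.
  have eta0 : 0 < (d - nr (f x)) / 2 by have := hK x Kx; lra.
  exists ([set y | nr (f y - f x) < (d - nr (f x)) / 2], [set z | z < (d - nr (f x)) / 2]).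
    by split; [exact: fc | exact: ball0_lt].
  move=> [y z] /= [h1 h2].
  have := nrD (f y - f x) (f x); rewrite subrK; lra.
by move/near0_pos.
Qed.

Definition ccball (g1 : character R G) (K : set G) (d : R) :=
  [set g : character R G | forall x, K x -> `|g x - g1 x| < d%:C].

Definition Good (g1 : character R G) (A : set (character R G)) :=
  exists K d, [/\ compact K, 0 < d & ccball g1 K d `<=` A].

Lemma GoodT g1 : Good g1 setT.
Proof. by exists set0, 1; split => //; exact: compact0. Qed.

Lemma GoodS g1 A B : A `<=` B -> Good g1 A -> Good g1 B.
Proof. by move=> AB [K [d [cK d0 h]]]; exists K, d; split => // g /h /AB. Qed.

Arguments GoodS {g1 A B}.
Lemma GoodI g1 A B : Good g1 A -> Good g1 B -> Good g1 (A `&` B).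
Proof.
move=> [K [d [cK d0 h]]] [K' [d' [cK' d0' h']]].
exists (K `|` K'), (Num.min d d'); split.
- exact: compactU.
- by rewrite lt_min d0 d0'.
- move=> g hg; split.
  + apply: h => x Kx; have := hg x (or_introl Kx); rewrite !nr_lt; move=> h1.
    by apply: lt_le_trans h1 _; rewrite ge_min lexx.
  + apply: h' => x Kx; have := hg x (or_intror Kx); rewrite !nr_lt; move=> h1.
    by apply: lt_le_trans h1 _; rewrite ge_min lexx orbT.
Qed.

Arguments GoodI {g1 A B}.
Lemma Good_basic g1 (A : set (character R G)) : cc_basic A -> A g1 -> Good g1 A.
Proof.
move=> [g0 [K [d [cK d0 ->]]]] /= h.
have hc : ncont (fun x => g1 x - g0 x).
  move=> x eps eps0.
  have e2 : 0 < eps / 2 by lra.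
  have h0 := @char_ncont g0 x _ e2; have h1 := @char_ncont g1 x _ e2.
  apply: filterS2 h0 h1 => y h0 h1.
  have -> : g1 y - g0 y - (g1 x - g0 x) = (g1 y - g1 x) + - (g0 y - g0 x) by ring.
  have := nrD (g1 y - g1 x) (- (g0 y - g0 x)); rewrite /nr normrN -/(nr _); lra.
have hK : forall x, K x -> nr (g1 x - g0 x) < d.
  by move=> x Kx; rewrite -nr_lt; exact: h.
have [del del0 hdel] := slack hc cK hK.
exists K, del; split => // g hg x Kx.
have -> : g x - g0 x = (g x - g1 x) + (g1 x - g0 x) by ring.
rewrite nr_lt; have := nrD (g x - g1 x) (g1 x - g0 x).
have := hg x Kx; rewrite nr_lt; have := hdel x Kx; lra.
Qed.

Arguments Good_basic {g1 A}.
Lemma Good_seq g1 (s : seq (set (character R G))) :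
  (forall i, i \in s -> cc_basic i) ->
  (forall i, i \in s -> i g1) ->
  Good g1 (\bigcap_(i in [set i | i \in s]) i).
Proof.
elim: s => [|a s IH] hb hg.
  by apply: (GoodS _ (GoodT g1)) => g _ i /=; rewrite in_nil.
have Ga : Good g1 a by apply: Good_basic; [apply: hb | apply: hg]; rewrite mem_head.
have Gs : Good g1 (\bigcap_(i in [set i | i \in s]) i).
  by apply: IH => i hi; [apply: hb | apply: hg]; rewrite in_cons hi orbT.
apply: (GoodS _ (GoodI Ga Gs)).
move=> g [ga gs] i /=; rewrite in_cons => /orP [/eqP -> //|his].
exact: gs.
Qed.

Lemma nbhs_Good (g1 : character R G) V : nbhs g1 V -> Good g1 V.
Proof.
rewrite nbhsE => -[B [oB Bg BV]].
have [D HD eB] := openU oB.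
move: Bg; rewrite eB => -[i Di ig].
apply: (@GoodS g1 i).
  by move=> g ig'; apply: BV; rewrite eB; exists i.
have [D' sD' eD'] := HD i Di.
move: ig; rewrite -eD' => ig; apply: Good_seq.
  by move=> j /sD'; rewrite in_setE.
by move=> j hj; apply: ig.
Qed.

Lemma ccball_nbhs g1 K d : compact K -> 0 < d -> nbhs g1 (ccball g1 K d).
Proof.
move=> cK d0; apply: open_nbhs_nbhs; split.
  exists (set1 (ccball g1 K d)); last by rewrite bigcup_set1.
  move=> _ ->; exists (fset1 (ccball g1 K d)).
    move=> j; rewrite inE => /eqP ->; rewrite in_setE; exists g1, K, d; split => //.
  by rewrite set_fset1 bigcap_set1.
by move=> x Kx; rewrite subrr normr0 ltcR.
Qed.
End T.

Section Main.
Variables (R : realType) (G : topologicalZmodType)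
  (S : set R) (mul : R -> R -> R) (inv : R -> R) (e : R) (H : R -> G -> G).
Hypotheses (hRG : is_RGroup S mul inv e) (hact : is_action S mul e H)
  (hcont : continuous_action S H)
  (hadd : forall a, S a -> forall x y : G, H a (x + y) = H a x + H a y).

Lemma Hcont a : S a -> continuous (H a).
Proof.
move=> Sa x V hV.
have [d d0 [U [hU hUV]]] := hcont Sa hV.
apply: filterS hU => y Uy; apply: hUV => //.
by rewrite subrr normr0.
Qed.

Lemma is_char_comp (g : character R G) a : S a -> is_character (char_fun g \o H a).
Proof.
move=> Sa; have /asboolP [gc gm gn] := char_funP g.
split => /=.
- by move=> x; apply: continuous_comp; [exact: Hcont | exact: gc].
- by move=> x y; rewrite hadd // gm.
- by move=> x; exact: gn.
Qed.

Lemma dualE a : S a -> forall g : character R G,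
  char_fun (dual_action H a g) = char_fun g \o H a.
Proof.
move=> Sa g; rewrite /dual_action insubdK //.
rewrite unfold_in; apply/asboolP; exact: is_char_comp.
Qed.

Lemma char_eq (g h : character R G) : char_fun g = char_fun h -> g = h.
Proof. exact: val_inj. Qed.

Lemma dual_is_action : is_action S mul e (dual_action H).
Proof.
have [[[Se Smul Sinv] massoc mcomm m1 mV] _ _ _ _] := hRG.
have [hbij hcomp he] := hact.
split.
- move=> a Sa; exists (dual_action H (inv a)) => g; apply: char_eq.
  + rewrite !dualE //; last exact: Sinv.
    rewrite -compA hcomp //; last exact: Sinv.
    rewrite mcomm ?mV //; last exact: Sinv. by rewrite he.
  + rewrite !dualE //; last exact: Sinv.
    rewrite -compA hcomp //; last exact: Sinv.
    by rewrite mV // he.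
- move=> a b Sa Sb; apply/funext => g /=; apply: char_eq.
  rewrite !dualE //; last exact: Smul.
  by rewrite -compA hcomp // mcomm.
- apply/funext => g; apply: char_eq; rewrite dualE //.
  by rewrite he.
Qed.

Definition Fc : set_system (set G) :=
  filter_from [set C | compact C] (fun C => [set C' | compact C' /\ C `<=` C']).

Lemma Fc_filter : Filter Fc.
Proof.
apply: filter_from_filter; first by exists set0; exact: compact0.
move=> i j ci cj; exists (i `|` j); first exact: compactU.
by move=> C' [cC' ijC']; split; split => // y hy; apply: ijC'; [left|right].
Qed.

Lemma dual_cont (hlc : forall y : G, exists C, nbhs y C /\ compact C) :
  continuous_action S (dual_action H).
Proof.
move=> a0 Sa0 g0 V hV.
have [K [del [cK del0 hKV]]] := nbhs_Good hV.
pose P (p : set G * R) (y : G) := S p.2 ->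
  p.1 (H p.2 y) /\ nr (g0 (H p.2 y) - g0 (H a0 y)) < del / 2.
have FcF := Fc_filter.
have FF : Filter (filter_prod Fc (nbhs a0)) by apply: filter_prod_filter.
have cov : near_covering K by apply/compact_near_coveringP.
have [[B1 B2] /= [FB1 nB2] sub] : \forall p \near filter_prod Fc (nbhs a0), K `<=` P p.
  apply: (cov _ _ _ FF) => x Kx.
  have [C [hC cC]] := hlc (H a0 x).
  have d4 : 0 < del / 4 by lra.
  have h1 := char_ncont g0 (H a0 x) d4.
  have hW : nbhs (H a0 x) (C `&` [set y | nr (g0 y - g0 (H a0 x)) < del / 4]) by apply: filterI.
  have [d d0 [U [hU hUW]]] := hcont Sa0 hW.
  exists (U, [set p : set G * R | (compact p.1 /\ C `<=` p.1) /\ `|p.2 - a0| < d]).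
    split => //; exists ([set C' | compact C' /\ C `<=` C'], [set a | `|a - a0| < d]).
      split; first by exists C.
      by apply/nbhs_ballP; exists d => // a; rewrite /ball /= distrC.
    by move=> [C' a] [].
  move=> [y [C' a]] /= [Uy [[cC' CC'] ad]] Sa.
  have [hc1 hc2] := hUW a Sa ad y Uy.
  have aa : `|a0 - a0| < d by rewrite subrr normr0.
  have [_ hc3] := hUW a0 Sa0 aa y Uy.
  split; first exact: CC'.
  have := nrD (g0 (H a y) - g0 (H a0 x)) (g0 (H a0 x) - g0 (H a0 y)).
  rewrite addrA subrK.
  move: hc2 hc3 => /= hc2 hc3; rewrite nrC in hc3.
  lra.
have [C0 cC0 hC0] := FB1.
have /nbhs_ballP [d /= d0 hd] := nB2.
have d2 : 0 < del / 2 by lra.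
exists d => //; exists (ccball g0 C0 (del / 2)); split; first exact: ccball_nbhs.
move=> a Sa ad g hg; apply: hKV => x Kx.
have B1C0 : B1 C0 by apply: hC0; split.
have B2a : B2 a by apply: hd; rewrite /ball /= distrC.
have [hCx hn] := sub (C0, a) (conj B1C0 B2a) x Kx Sa.
rewrite !dualE //= nr_lt.
have := hg _ hCx; rewrite nr_lt => hg'.
have := nrD (g (H a x) - g0 (H a x)) (g0 (H a x) - g0 (H a0 x)).
rewrite addrA subrK; move: hn => /= hn; lra.
Qed.

Lemma H0 a : S a -> H a 0 = 0.
Proof.
move=> Sa; have h := hadd Sa 0 0; rewrite addr0 in h.
by apply/(addrI (H a 0)); rewrite addr0 -h.
Qed.

Lemma abs0 (hT : hausdorff_space G) (habs : absorptive S inv H) :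
  forall V, nbhs (0:G) V -> forall x : G,
    exists U, nbhs x U /\ exists2 al, S al &
      forall a, S a -> a <= al -> forall y, U y -> V (H (inv a) y).
Proof.
have [[[Se Smul Sinv] _ _ _ _] _ _ _ _] := hRG.
have [w hw] := habs.
suff w0 : w = 0 by rewrite -w0.
apply: hT => A B hA hB.
have [U [hU [al Sal hal]]] := hw A hA 0.
exists 0; split; last exact: nbhs_singleton hB.
have := hal al Sal (lexx al) 0 (nbhs_singleton hU).
by rewrite H0 //; exact: Sinv.
Qed.

Lemma one_is_char : is_character (fun _ : G => (1 : R[i])).
Proof.
split.
- exact: cst_continuous.
- by move=> x y; rewrite mulr1.
- by move=> x; rewrite normr1.
Qed.

Definition one_char : character R G := Character (asboolT one_is_char).

Lemma char0 (g : character R G) : g 0 = 1.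
Proof.
have /asboolP [_ gm gn] := char_funP g.
have nz : g 0 != 0.
  apply/eqP => h; move: (gn 0); rewrite h normr0 => /eqP.
  by rewrite eq_sym oner_eq0.
by apply: (mulfI nz); rewrite mulr1 -gm addr0.
Qed.

Definition Fa : set_system R :=
  filter_from [set al | S al] (fun al => [set a | S a -> a <= al]).

Lemma Fa_filter : Filter Fa.
Proof.
have [[[Se Smul Sinv] _ _ _ _] _ _ _ _] := hRG.
apply: filter_from_filter; first by exists e.
move=> i j Si Sj; exists (Num.min i j).
  by rewrite /Num.min; case: ifP.
by move=> a ha; split => Sa; have := ha Sa; rewrite le_min => /andP[].
Qed.

Lemma dual_abs (hT : hausdorff_space G)
  (hlc : forall y : G, exists C, nbhs y C /\ compact C)
  (habs : absorptive S inv H) : absorptive S inv (dual_action H).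
Proof.
have [[[Se Smul Sinv] _ _ _ _] _ _ _ _] := hRG.
exists one_char => V hV gam.
have [K [del [cK del0 hKV]]] := nbhs_Good hV.
have [C [hC cC]] := hlc 0.
have d2 : 0 < del / 2 by lra.
have h1 := char_ncont gam 0 d2.
have hW : nbhs (0:G) (C `&` [set y | nr (gam y - gam 0) < del / 2]) by apply: filterI.
have FaF := Fa_filter.
have cov : near_covering K by apply/compact_near_coveringP.
have [al Sal hal] : \forall a \near Fa, K `<=` (fun y => S a -> (C `&` [set y | nr (gam y - gam 0) < del / 2]) (H (inv a) y)).
  apply: (cov _ _ _ FaF) => x Kx.
  have [U [hU [al Sal hal]]] := abs0 hT habs hW x.
  exists (U, [set a | S a -> a <= al]); first by split => //; exists al.
  by move=> [y a] /= [Uy ha] Sa; apply: hal => //; exact: ha.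
exists (ccball gam C (del / 2)); split; first exact: ccball_nbhs.
exists al => // a Sa ala g hg; apply: hKV => x Kx.
have [hCx hn] := hal a (fun _ => ala) x Kx Sa.
rewrite dualE /=; last exact: Sinv.
rewrite nr_lt; have := hg _ hCx; rewrite nr_lt => hg'.
move: hn => /=; rewrite char0 => hn.
have := nrD (g (H (inv a) x) - gam (H (inv a) x)) (gam (H (inv a) x) - 1).
rewrite addrA subrK; lra.
Qed.
End Main.

Lemma lc_nbhs (R : realType) (G : topologicalZmodType) :
  locally_compact [set: G] -> forall y : G, exists C, nbhs y C /\ compact C.
Proof.
move=> hl y; have [U hU [cU _]] := hl y I.
by exists U; split => //; rewrite withinET in hU.
Qed.

Theorem proposition5p2 (R : realType) (G : topologicalZmodType)
  (S : set R) (mul : R -> R -> R) (inv : R -> R) (e : R)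
  (H : R -> G -> G) :
  hausdorff_space G ->
  locally_compact [set: G] ->
  (exists x : G, x != 0) ->
  is_RGroup S mul inv e ->
  is_action S mul e H ->
  continuous_action S H ->
  absorptive S inv H ->
  (forall a, S a -> forall x y : G, H a (x + y) = H a x + H a y) ->
  [/\ (forall a, S a -> forall g : character R G,
          char_fun (dual_action H a g) = char_fun g \o H a),
      is_action S mul e (dual_action H),
      continuous_action S (dual_action H) &
      absorptive S inv (dual_action H)].
Proof.
move=> hT hl _ hRG hact hcont habs hadd.
have hlc := lc_nbhs R hl.
split.
- by move=> a Sa g; apply: (dualE hcont hadd).
- exact: (dual_is_action hRG hact hcont hadd).
- exact: (dual_cont hcont hadd hlc).
- exact: (dual_abs hRG hcont hadd hT hlc habs).
Qed.
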